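(* Let $E$ be a finite directed graph with $|E^1|=n\ge1$. Then $\mathrm{h}_{\mathrm{alg}}(L_K(E))\le\log(2n)$.
   Context: For a finite directed graph $E=(E^0,E^1,s,r)$, the Leavitt path algebra $L_K(E)$ over a field $K$ is generated by $E^0\cup E^1\cup\{e^*:e\in E^1\}$ subject to: $vw=\delta_{v,w}v$ for vertices; $s(e)e=e=er(e)$, $r(e)e^*=e^*=e^*s(e)$; $e^*f=\delta_{e,f}r(e)$; $\sum_{s(e)=v}ee^*=v$ for each vertex $v$ with $0<|s^{-1}(v)|<\infty$. Its standard filtration $W_m$ is the span of $\lambda\mu^*$ with $\lambda,\mu$ paths and $l(\lambda)+l(\mu)\le m$. $\mathrm{h}_{\mathrm{alg}}(L_K(E))=0$ if $L_K(E)$ is finite-dimensional and otherwise $\limsup_m\frac1m\log\dim(W_m/W_{m-1})$. *)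

(* Defs.v *)
From HB Require Import structures.
From mathcomp Require Import all_boot all_order all_algebra.
From mathcomp Require Import all_classical all_reals all_analysis.
Set Implicit Arguments. Unset Strict Implicit. Unset Printing Implicit Defensive.
Import Order.TTheory GRing.Theory Num.Theory.
Local Open Scope ring_scope.

(* A finite directed graph E = (E^0, E^1, s, r): vertices V : finType,
   edges Ed : finType, source s and range r. *)

Section Leavitt.
Variables (K : fieldType) (V Ed : finType) (s r : Ed -> V).

(* Leavitt relations for a family (v |-> pv v, e |-> pe e, e |-> pes e = e^* )
   in a K-algebra B. *)
Definition leavitt_family (B : algType K) (pv : V -> B) (pe pes : Ed -> B) : Prop :=
  [/\ (forall v w, pv v * pv w = if v == w then pv v else 0),
      (forall e, pv (s e) * pe e = pe e /\ pe e * pv (r e) = pe e),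
      (forall e, pv (r e) * pes e = pes e /\ pes e * pv (s e) = pes e),
      (forall e f, pes e * pe f = if e == f then pv (r e) else 0) &
      (forall v, (exists e, s e = v) ->
          \sum_(e | s e == v) pe e * pes e = pv v)].

(* K-algebra homomorphism (not necessarily unital). *)
Definition alg_hom (A B : algType K) (phi : A -> B) : Prop :=
  (forall (a : K) (x y : A), phi (a *: x + y) = a *: phi x + phi y) /\
  (forall x y : A, phi (x * y) = phi x * phi y).

Definition is_leavitt_path_algebra (A : algType K) (pv : V -> A) (pe pes : Ed -> A)
  : Prop :=
  leavitt_family pv pe pes /\
  forall (B : algType K) (qv : V -> B) (qe qes : Ed -> B),
    leavitt_family qv qe qes ->
    exists phi : A -> B,
      [/\ alg_hom phi, (forall v, phi (pv v) = qv v),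
          (forall e, phi (pe e) = qe e), (forall e, phi (pes e) = qes e) &
          (forall psi : A -> B, alg_hom psi -> (forall v, psi (pv v) = qv v) ->
             (forall e, psi (pe e) = qe e) -> (forall e, psi (pes e) = qes e) ->
             psi =1 phi)].

(* Paths: a pair (v, p) with p = e_1 ... e_k, s(e_1) = v, r(e_i) = s(e_{i+1});
   when k = 0 this is the trivial path at the vertex v. Length = size p. *)
Definition is_path (v : V) (p : seq Ed) : bool :=
  (if p is e :: _ then s e == v else true) && sorted (fun e f => r e == s f) p.

Definition paths_len (k : nat) : seq (V * seq Ed) :=
  [seq vp <- [seq (v, tval t) | v <- enum V, t <- enum {:k.-tuple Ed}] | is_path vp.1 vp.2].

Definition paths_upto (m : nat) : seq (V * seq Ed) :=
  flatten [seq paths_len k | k <- iota 0 m.+1].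

Variables (A : algType K) (pv : V -> A) (pe pes : Ed -> A).

Definition path_elt (vp : V * seq Ed) : A := pv vp.1 * \prod_(e <- vp.2) pe e.
Definition ghost_elt (vp : V * seq Ed) : A :=
  (\prod_(e <- rev vp.2) pes e) * pv vp.1.

(* spanning family of W_m : all lambda mu^* with l(lambda) + l(mu) <= m *)
Definition Wgen (m : nat) : seq A :=
  [seq path_elt lm.1 * ghost_elt lm.2 |
     lm <- [seq (l, u) | l <- paths_upto m, u <- paths_upto m]
   & (size lm.1.2 + size lm.2.2 <= m)%N].

End Leavitt.

Section LinAlg.
Variables (K : fieldType) (A : lmodType K).

Definition lin_indep (vs : seq A) : Prop :=
  forall c : seq K, size c = size vs ->
    \sum_(i < size vs) c`_i *: vs`_i = 0 -> forall i, (i < size vs)%N -> c`_i = 0.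

Definition dim_span (vs : seq A) : nat :=
  \max_(t : (size vs).-tuple bool | `[< lin_indep (mask t vs) >]) size (mask t vs).

Definition finite_dim : Prop :=
  exists vs : seq A, forall x : A,
    exists c : seq K, x = \sum_(i < size vs) c`_i *: vs`_i.
End LinAlg.

Section Entropy.
Variables (K : fieldType) (V Ed : finType) (s r : Ed -> V).
Variables (A : algType K) (pv : V -> A) (pe pes : Ed -> A).

Definition W_dim (m : nat) : nat := dim_span (Wgen s r pv pe pes m).

(* dim (W_m / W_{m-1}) = dim W_m - dim W_{m-1}  (W_{-1} = 0, W_{m-1} <= W_m) *)
Definition W_quot_dim (m : nat) : nat :=
  if m is m'.+1 then (W_dim m'.+1 - W_dim m')%N else W_dim 0.

(* (1/m) log dim(W_m/W_{m-1}) in the extended reals, with log 0 = -oo *)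
Definition growth_term (R : realType) (m : nat) : \bar R :=
  if W_quot_dim m == 0%N then -oo%E
  else ((ln (W_quot_dim m)%:R) / m%:R)%:E.

Definition h_alg (R : realType) : \bar R :=
  if `[< finite_dim A >] then 0%E else limn_esup (growth_term R).
End Entropy.

(* Main.v *)
From Pilot Require Import Defs.
From HB Require Import structures.
From mathcomp Require Import all_boot all_order all_algebra.
From mathcomp Require Import all_classical all_reals all_analysis.
Import Order.TTheory GRing.Theory Num.Theory.
From mathcomp Require Import zify.

Section Comb.
Variables (V Ed : finType) (s r : Ed -> V).

Lemma size_paths_len k : (size (paths_len s r k) <= #|V| * #|Ed| ^ k)%N.
Proof.
rewrite /paths_len size_filter (leq_trans (count_size _ _)) //.
by rewrite size_allpairs -!cardE card_tuple.
Qed.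

Lemma mem_paths_len k x : x \in paths_len s r k -> size x.2 = k.
Proof.
rewrite mem_filter => /andP[_ /allpairsP [[v t] [_ _ ->]]] /=.
by rewrite size_tuple.
Qed.

Lemma sum_upto m (F : V * seq Ed -> nat) (G : nat -> nat) :
  (forall k x, (k <= m)%N -> x \in paths_len s r k -> (F x <= G k)%N) ->
  (\sum_(x <- paths_upto s r m) F x <= \sum_(k < m.+1) #|V| * #|Ed| ^ k * G k)%N.
Proof.
move=> H; rewrite /paths_upto big_flatten big_map.
rewrite -(subn0 m.+1) -/(index_iota 0 m.+1) big_mkord.
apply: leq_sum => k _.
apply: (@leq_trans (\sum_(x <- paths_len s r k) G k)).
  rewrite big_seq_cond [X in (_ <= X)%N]big_seq_cond.
  apply: leq_sum => x /andP[xin _]; apply: H xin; exact: (ltn_ord k).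
by rewrite big_const_seq count_predT iter_addn_0 mulnC leq_mul2r size_paths_len orbT.
Qed.

Lemma size_Wgen (K : fieldType) (A : algType K) (pv : V -> A) (pe pes : Ed -> A) m :
  (1 <= #|Ed|)%N ->
  (size (Wgen s r pv pe pes m) <= m.+1 * m.+1 * (#|V| * #|V| * #|Ed| ^ m))%N.
Proof.
move=> hn.
rewrite /Wgen size_map size_filter -sum1_count big_mkcond big_allpairs /=.
set n := #|Ed|.
apply: (leq_trans (@sum_upto _ _ (fun k1 => \sum_(k2 < m.+1) #|V| * n ^ k2 * (k1 + k2 <= m)%N) _)).
  move=> k1 x k1m xin; rewrite (mem_paths_len _ _ xin).
  apply: (leq_trans (@sum_upto _ _ (fun k2 => (k1 + k2 <= m)%N) _)) => //.
  move=> k2 y k2m yin; rewrite (mem_paths_len _ _ yin).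
  by case: ifP.
have -> : (m.+1 * m.+1 * (#|V| * #|V| * n ^ m) =
   \sum_(k1 < m.+1) \sum_(k2 < m.+1) (#|V| * #|V| * n ^ m))%N.
  by rewrite !sum_nat_const !card_ord; lia.

apply: leq_sum => k1 _; rewrite big_distrr /=.
apply: leq_sum => k2 _.
case: (leqP (k1 + k2) m) => h /=; last by rewrite !muln0.
rewrite /n muln1 mulnACA leq_mul2l -expnD leq_pexp2l ?h ?orbT //.
Qed.
End Comb.

Lemma cube_le_pow k : ((k + 13) ^ 3 <= 2 ^ (k + 12))%N.
Proof.
elim: k => [|k IH]; first by [].
rewrite !addSn expnS.
have h : ((k + 13).+1 ^ 3 <= 2 * (k + 13) ^ 3)%N.
  rewrite !expnS expn0; nia.
apply: leq_trans h _; by rewrite (expnS 2) leq_mul2l IH orbT.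
Qed.

Lemma growth_bound C : exists M, (1 <= M)%N /\
  forall m, (M <= m)%N -> (m.+1 * m.+1 * C <= 2 ^ m)%N.
Proof.
exists (maxn 12 C); split; first by rewrite leq_max.
move=> m; rewrite geq_max => /andP[h12 hC].
have := cube_le_pow (m - 12); rewrite subnK // => h.
apply: leq_trans h; rewrite (_ : m - 12 + 13 = m.+1)%N; last lia.
rewrite expnS -mulnA; apply: leq_mul => //; rewrite expnS expn1; apply: leq_mul => //; exact: leq_trans hC _.
Qed.

Lemma dim_span_le (K : fieldType) (A : lmodType K) (vs : seq A) :
  (Pilot.Defs.dim_span vs <= size vs)%N.
Proof.
apply/bigmax_leqP => t _.
by rewrite size_mask ?size_tuple // (leq_trans (count_size _ _)) ?size_tuple.
Qed.

Local Open Scope ring_scope.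

Theorem corollary4p6 (K : fieldType) (V Ed : finType) (s r : Ed -> V)
  (A : algType K) (pv : V -> A) (pe pes : Ed -> A)
  (HA : is_leavitt_path_algebra s r pv pe pes)
  (R : realType) (hn : (1 <= #|Ed|)%N) :
  (h_alg s r pv pe pes R <= (ln (2 * #|Ed|%:R : R))%:E)%E.
Proof.
have [M [M1 HM]] := growth_bound (#|V| * #|V|).
have key : forall m, (M <= m)%N ->
    (growth_term s r pv pe pes R m <= (ln (2 * #|Ed|%:R : R))%:E)%E.
  move=> m hm; rewrite /growth_term.
  case: eqP => [_|hq]; first exact: leNye.
  have m0 : (0 < m)%N by exact: leq_trans M1 hm.
  have hqle : (W_quot_dim s r pv pe pes m <= (2 * #|Ed|) ^ m)%N.
    apply: (@leq_trans (W_dim s r pv pe pes m)).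
      by rewrite /W_quot_dim; case: (m) => //= m'; exact: leq_subr.
    rewrite /W_dim; apply: leq_trans (dim_span_le _ _ _) _.
    apply: leq_trans (@size_Wgen _ _ _ _ _ _ _ _ _ _ hn) _.
    by rewrite expnMn mulnA leq_mul // HM.
  rewrite lee_fin ler_pdivrMr ?ltr0n // (mulr_natr (ln (2 * #|Ed|%:R : R)) m) -lnXn; last first.
    by rewrite mulr_gt0 // ltr0n.
  have q0 : (0 < W_quot_dim s r pv pe pes m)%N by rewrite lt0n; apply/eqP.
  rewrite ler_ln ?posrE ?ltr0n //; last first.
    by rewrite exprn_gt0 // mulr_gt0 // ltr0n.
  have -> : (2 * #|Ed|%:R : R) = (2 * #|Ed|)%N%:R by rewrite natrM.
  by rewrite -natrX ler_nat.
rewrite /h_alg; case: asboolP => _.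
  rewrite lee_fin ln_ge0 //.
  have h1 : (1 <= 2 * #|Ed|)%N by lia.
  have -> : (2 * #|Ed|%:R : R) = (2 * #|Ed|)%N%:R by rewrite natrM.
  by rewrite ler1n.
rewrite limn_esup_lim; apply: lime_le; first exact: is_cvg_esups.
exists M => // m /= hm.
apply: ub_ereal_sup => _ [k /= hk <-]; apply: key; exact: leq_trans hm hk.
Qed.
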